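(* Let $H$ be an $\mathcal H$-class of $\mathcal{OR}_n$ containing an idempotent of rank $k$. If $k=n$ then $H=W'$, and if $k\in\{1,\dots,m\}$ then $H$ is isomorphic (as a group) to the symmetric group $S_k$.
   Context: Let $m\ge 1$, $n=2m$, $\mathbf n=\{1,\dots,n\}$, $\theta(i)=n+1-i$, written $\bar i$. A proper subset $I\subset\mathbf n$ is admissible if $I\cap\theta(I)=\emptyset$; $\mathbf n$ and $\emptyset$ are also admissible. For an injective partial map $\sigma$ of $\mathbf n$, $I(\sigma)$ is its domain, $J(\sigma)$ its image, $\mathrm{rk}(\sigma)=|I(\sigma)|$; products are compositions of partial maps. $W=\{\sigma\in S_n:\sigma(\bar i)=\overline{\sigma(i)}\ \forall i\}$, $W'=\{\sigma\in W:|\sigma(\{1,\dots,m\})\cap\{m+1,\dots,n\}|\text{ even}\}$. An admissible $m$-subset is of type I if it contains an even number of elements $>m$, type II otherwise. $\mathcal{OR}_n$ consists of the injective partial maps $\sigma$ with: $\mathrm{rk}(\sigma)<m$ and $I(\sigma),J(\sigma)$ admissible; or $\mathrm{rk}(\sigma)=m$ and $I(\sigma),J(\sigma)$ admissible of the same type; or $\sigma\in W'$. $\mathcal H$ is Green's $\mathcal H$-relation on the monoid $\mathcal{OR}_n$. *)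

(* Defs.v *)
From mathcomp Require Import all_boot all_fingroup.
Set Implicit Arguments. Unset Strict Implicit. Unset Printing Implicit Defensive.

(* Points 1..n of the paper are encoded as 'I_n = {0,..,n-1} (i <-> i+1),
   with n = 2 * m.  theta(i) = n+1-i becomes rev_ord i = n-1-i.
   An element > m (1-indexed) is an ordinal i with m <= i (0-indexed). *)

Notation pmapn m := {ffun 'I_(2 * m) -> option 'I_(2 * m)}.

Section Defs.
Variable m : nat.
Local Notation n := (2 * m).
Local Notation pm := (pmapn m).

Definition theta (i : 'I_n) : 'I_n := rev_ord i.

Definition dom (s : pm) : {set 'I_n} := [set i | s i != None].
Definition img (s : pm) : {set 'I_n} := [set j | [exists i, s i == Some j]].
Definition rk (s : pm) : nat := #|dom s|.

Definition pinj (s : pm) : bool :=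
  [forall i, forall j, ((s i != None) && (s i == s j)) ==> (i == j)].

(* product = composition of partial maps: first s, then t *)
Definition pmul (s t : pm) : pm := [ffun i => obind t (s i)].

Definition admissible (I : {set 'I_n}) : bool :=
  (I == [set: 'I_n]) || [disjoint I & theta @: I].

Definition inW (s : pm) : bool :=
  pinj s && [forall i, s i != None] &&
  [forall i, s (theta i) == omap theta (s i)].

Definition inW' (s : pm) : bool :=
  inW s &&
  ~~ odd #|[set i : 'I_n | (i < m) && [exists j : 'I_n, (m <= j) && (s i == Some j)]]|.

Definition typeI (I : {set 'I_n}) : bool := ~~ odd #|[set i in I | m <= i]|.

Definition OR : {set pm} :=
  [set s | pinj s &&
     [|| (rk s < m) && admissible (dom s) && admissible (img s),
         [&& rk s == m, admissible (dom s), admissible (img s)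
           & typeI (dom s) == typeI (img s)]
       | inW' s]].

(* Green's relations in the monoid OR (it contains the identity) *)
Definition Rrel (a b : pm) : Prop :=
  (exists2 x, x \in OR & b = pmul a x) /\ (exists2 y, y \in OR & a = pmul b y).
Definition Lrel (a b : pm) : Prop :=
  (exists2 x, x \in OR & b = pmul x a) /\ (exists2 y, y \in OR & a = pmul y b).
Definition Hrel (a b : pm) : Prop := Rrel a b /\ Lrel a b.

End Defs.

(* Main.v *)
Require Import Defs.
From mathcomp Require Import all_boot all_fingroup.
From mathcomp Require Import zify.
From Stdlib Require Import Lia.
Set Implicit Arguments. Unset Strict Implicit. Unset Printing Implicit Defensive.

Lemma pinjP m (s : pmapn m) : pinj s -> forall i j, s i != None -> s i = s j -> i = j.
Proof.
move=> /forallP H i j ni eij; move/forallP: (H i) => /(_ j) /implyP; apply: (fun h => _) => h.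
by apply/eqP/h; rewrite ni eij eqxx.
Qed.

Lemma OR_pinj m (s : pmapn m) : s \in OR m -> pinj s.
Proof. by rewrite inE => /andP[]. Qed.

Lemma idem_fix m (e : pmapn m) : e \in OR m -> pmul e e = e ->
  forall i j, e i = Some j -> j = i.
Proof.
move=> eOR eid i j eij.
have : pmul e e i = e i by rewrite eid.
rewrite ffunE eij /= => ej.
apply: (pinjP (OR_pinj eOR)); by rewrite ?ej ?eij.
Qed.

Lemma rk_full m (s : pmapn m) : (forall i, s i != None) -> rk s = 2 * m.
Proof.
move=> h; rewrite /rk.
have -> : Defs.dom s = setT by apply/setP => i; rewrite !inE h.
by rewrite cardsT card_ord.
Qed.

Lemma inW'_full m (s : pmapn m) : inW' s -> forall i, s i != None.
Proof. by move=> /andP[/andP[/andP[_ /forallP h] _] _]. Qed.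

Lemma OR_full m (hm : 1 <= m) (s : pmapn m) : s \in OR m -> (forall i, s i != None) -> inW' s.
Proof.
rewrite inE => /andP[_ h] full; move: h; rewrite rk_full //.
have h1 : (2 * m < m) = false by apply/negbTE; rewrite -leqNgt; lia.
have h2 : (2 * m == m) = false by apply/negbTE; lia.
by rewrite h1 h2.
Qed.

Lemma OR_adm m (hm : 1 <= m) (s : pmapn m) : s \in OR m -> rk s <= m -> admissible (Defs.dom s).
Proof.
move=> sOR hk; move: (sOR); rewrite inE => /andP[_ /or3P[]].
- by case/andP=> /andP[].
- by case/and4P.
- move=> /inW'_full /rk_full; lia.
Qed.
Section Part2.
Variables (m : nat) (hm : 1 <= m) (e : pmapn m).
Hypotheses (eOR : e \in OR m) (eid : pmul e e = e) (hk : rk e <= m).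
Variables (x0 : 'I_(2 * m)) (x0I : x0 \in Defs.dom e).

Local Notation I := (Defs.dom e).
Let g (x : 'I_(rk e)) : 'I_(2 * m) := enum_val (A := I) x.

Lemma gI x : g x \in I. Proof. exact: enum_valP. Qed.
Lemma g_inj : injective g. Proof. exact: enum_val_inj. Qed.
Lemma gK i : i \in I -> g (enum_rank_in x0I i) = i.
Proof. exact: enum_rankK_in. Qed.
Lemma Kg x : enum_rank_in x0I (g x) = x.
Proof. exact: enum_valK_in. Qed.

Lemma e_def i : e i = if i \in I then Some i else None.
Proof.
rewrite inE; case E: (e i) => [j|] //=.
by rewrite (idem_fix eOR eid E).
Qed.

Definition mk (p : {perm 'I_(rk e)}) : pmapn m :=
  [ffun i => if i \in I then Some (g (p (enum_rank_in x0I i))) else None].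

Lemma mk_g p x : mk p (g x) = Some (g (p x)).
Proof. by rewrite ffunE gI Kg. Qed.

Lemma mk_out p i : i \notin I -> mk p i = None.
Proof. by rewrite ffunE => /negbTE ->. Qed.

Lemma mk_cases p i : (i \in I /\ exists x, i = g x /\ mk p i = Some (g (p x)))
   \/ (i \notin I /\ mk p i = None).
Proof.
case: (boolP (i \in I)) => iI; last by right; rewrite mk_out.
left; split=> //; exists (enum_rank_in x0I i); split; [by rewrite gK | by rewrite ffunE iI].
Qed.

Lemma mk1 : mk 1 = e.
Proof.
apply/ffunP => i; rewrite e_def.
case: (mk_cases 1 i) => [[iI [x [-> ->]]]|[/negbTE -> ->]] //.
by rewrite gI perm1.
Qed.

Lemma mkM p q : pmul (mk p) (mk q) = mk (p * q).
Proof.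
apply/ffunP => i; rewrite ffunE.
case: (mk_cases p i) => [[iI [x [-> ->]]]|[iI ->]] /=.
  by rewrite !mk_g permM.
by rewrite mk_out.
Qed.

Lemma mk_inj : injective mk.
Proof.
move=> p q h; apply/permP => x.
by have := mk_g p x; rewrite h mk_g => -[/g_inj].
Qed.

Lemma dom_mk p : Defs.dom (mk p) = I.
Proof.
apply/setP => i; rewrite inE.
by case: (mk_cases p i) => [[iI [x [_ ->]]]|[/negbTE -> ->]].
Qed.

Lemma img_mk p : img (mk p) = I.
Proof.
apply/setP => j; rewrite inE; apply/existsP/idP.
  case=> i /eqP; case: (mk_cases p i) => [[iI [x [_ ->]]]|[_ ->]] // [<-].
  exact: gI.
move=> jI; exists (g (p^-1 (enum_rank_in x0I j)))%g.
by rewrite mk_g permKV gK.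
Qed.

Lemma mk_OR p : mk p \in OR m.
Proof.
rewrite inE; apply/andP; split.
  apply/forallP => i; apply/forallP => j; apply/implyP => /andP[ni /eqP eij].
  move: ni eij.
  case: (mk_cases p i) => [[iI [x [-> ->]]]|[_ ->]] //= _.
  case: (mk_cases p j) => [[jI [y [-> ->]]]|[_ ->]] //= [/g_inj].
  by move/perm_inj ->.
have adm := OR_adm hm eOR hk.
rewrite /rk dom_mk img_mk adm.
move: hk; rewrite /rk leq_eqVlt => /orP[->|->] //=.
by rewrite eqxx andbT orbT.
Qed.

Lemma mk_H p : Hrel e (mk p).
Proof.
rewrite -mk1; split; split.
- by exists (mk p); rewrite ?mk_OR // mkM mul1g.
- by exists (mk p^-1); rewrite ?mk_OR // mkM mulgV.
- by exists (mk p); rewrite ?mk_OR // mkM mulg1.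
- by exists (mk p^-1); rewrite ?mk_OR // mkM mulVg.
Qed.

Lemma H_mk b : b \in OR m -> Hrel e b -> exists p, b = mk p.
Proof.
move=> bOR [[[x _ bx] [y _ ey]] [[x' _ bx'] [y' _ ey']]].
have out i : i \notin I -> b i = None.
  by rewrite bx ffunE inE negbK => /eqP ->.
have inn i : i \in I -> b i != None.
  rewrite inE; apply: contraNN => /eqP h.
  by rewrite ey ffunE h.
have rng i j : b i = Some j -> j \in I.
  rewrite bx' ffunE; case: (x' i) => //= k ek.
  by rewrite inE (idem_fix eOR eid ek) ek.
have bi := pinjP (OR_pinj bOR).
pose h (z : 'I_(rk e)) : 'I_(rk e) :=
  if b (g z) is Some j then enum_rank_in x0I j else z.
have hP z : b (g z) = Some (g (h z)).
  rewrite /h; case E: (b (g z)) => [j|]; first by rewrite gK // (rng _ _ E).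
  by move: (inn _ (gI z)); rewrite E.
have h_inj : injective h.
  move=> u v huv; apply: g_inj; apply: bi; first exact: inn (gI u).
  by rewrite !hP huv.
exists (perm h_inj); apply/ffunP => i.
case: (mk_cases (perm h_inj) i) => [[iI [z [-> ->]]]|[iI ->]].
  by rewrite permE hP.
exact: out.
Qed.

End Part2.
Lemma perm_cross N (s : {perm 'I_N}) (L : {set 'I_N}) :
  #|[set i in L | s i \notin L]| = #|[set i in L | (s^-1)%g i \notin L]|.
Proof.
set A := s @^-1: L.
have e1 : [set i in L | s i \notin L] = L :\: A.
  by apply/setP => i; rewrite !inE andbC.
have e2 : [set i in L | (s^-1)%g i \notin L] = (s^-1)%g @^-1: (A :\: L).
  by apply/setP => i; rewrite !inE permKV andbC.
rewrite e1 e2 card_preimset; last exact: perm_inj.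
have h1 := cardsID A L; have h2 := cardsID L A.
have h3 : #|A| = #|L| by rewrite card_preimset //; exact: perm_inj.
rewrite setIC in h2; lia.
Qed.

Section Part1.
Variables (m : nat) (hm : 1 <= m).

Definition idf : pmapn m := [ffun i => Some i].

Lemma total_id (e : pmapn m) : e \in OR m -> pmul e e = e -> rk e = 2 * m -> e = idf.
Proof.
move=> eOR eid hr.
have dT : Defs.dom e = setT.
  apply/eqP; rewrite eqEcard subsetT cardsT card_ord.
  by move: hr; rewrite /rk /= => ->.
apply/ffunP => i; rewrite ffunE.
have : i \in Defs.dom e by rewrite dT inE.
rewrite inE; case E: (e i) => [j|] // _.
by rewrite (idem_fix eOR eid E).
Qed.

Lemma pmul_idl (s : pmapn m) : pmul idf s = s.
Proof. by apply/ffunP => i; rewrite !ffunE. Qed.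
Lemma pmul_idr (s : pmapn m) : pmul s idf = s.
Proof. by apply/ffunP => i; rewrite !ffunE; case: (s i) => //= a; rewrite ffunE. Qed.

Lemma inW'_OR (s : pmapn m) : inW' s -> s \in OR m.
Proof.
move=> h; rewrite inE; move: (h) => /andP[/andP[/andP[-> _] _] _].
by rewrite h !orbT.
Qed.

Lemma inW'_inv (s : pmapn m) : inW' s ->
  exists2 t, inW' t & pmul s t = idf /\ pmul t s = idf.
Proof.
move=> hs; have full := inW'_full hs.
move: (hs) => /andP[/andP[/andP[pi _] /forallP th] par].
pose sg i := odflt i (s i).
have sgE i : s i = Some (sg i).
  by rewrite /sg; move: (full i); case: (s i).
have sg_inj : injective sg.
  move=> i j h; apply: (pinjP pi); by rewrite ?full // !sgE h.
pose p := perm sg_inj.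
have pE i : s i = Some (p i) by rewrite permE sgE.
exists [ffun j => Some ((p^-1)%g j)]; last first.
  split; apply/ffunP => i; rewrite !ffunE ?pE /= ?ffunE ?pE ?permK ?permKV //.
have pth i : p (theta i) = theta (p i).
  by move: (th i); rewrite !pE /= => /eqP [].
apply/andP; split; first apply/andP; first split.
- apply/andP; split.
  + apply/forallP => i; apply/forallP => j; apply/implyP => /andP[_].
    by rewrite !ffunE => /eqP [/perm_inj ->].
  + by apply/forallP => i; rewrite ffunE.
- apply/forallP => j; rewrite !ffunE /=; apply/eqP; congr Some.
  apply: (@perm_inj _ p); by rewrite pth !permKV.
- have cnt (t : {perm 'I_(2 * m)}) (u : pmapn m) : (forall i, u i = Some (t i)) ->
     [set i : 'I_(2 * m) | (i < m) && [exists j : 'I_(2 * m), (m <= j) && (u i == Some j)]]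
     = [set i in [set i : 'I_(2 * m) | i < m] | t i \notin [set i : 'I_(2 * m) | i < m]].
    move=> uE; apply/setP => i; rewrite !inE uE; congr (_ && _).
    apply/existsP/idP => [[j /andP[mj /eqP [->]]]|h]; first by rewrite -leqNgt.
    by exists (t i); rewrite eqxx andbT leqNgt.
  move: par; rewrite (cnt _ _ pE) (cnt (p^-1)%g); last by move=> i; rewrite ffunE.
  by rewrite perm_cross.
Qed.

End Part1.

Theorem proposition3p5 (m : nat) (hm : 1 <= m) (e : pmapn m)
  (eOR : e \in OR m) (eid : pmul e e = e) (H : {set pmapn m})
  (HH : forall b, b \in H <-> (b \in OR m /\ Hrel e b)) :
  (rk e = 2 * m -> forall s, s \in H <-> inW' s) /\
  (1 <= rk e <= m ->
     (forall a b, a \in H -> b \in H -> pmul a b \in H) /\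
     exists f : pmapn m -> {perm 'I_(rk e)},
       [/\ (forall a b, a \in H -> b \in H -> f a = f b -> a = b),
           (forall p : {perm 'I_(rk e)}, exists2 a, a \in H & f a = p)
         & (forall a b, a \in H -> b \in H -> f (pmul a b) = (f a * f b)%g)]).
Proof.
split.
  move=> hr s; have eE := total_id eOR eid hr; rewrite HH eE; split.
    move=> [sOR [[_ [y _ ey]] _]]; apply: OR_full => // i.
    have : idf m i = pmul s y i by rewrite -ey.
    by rewrite !ffunE; case: (s i).
  move=> hs; have [t ht [st ts]] := inW'_inv hs.
  split; first exact: inW'_OR.
  split; split.
  - by exists s; rewrite ?inW'_OR // pmul_idl.
  - by exists t; rewrite ?inW'_OR.
  - by exists s; rewrite ?inW'_OR // pmul_idr.
  - by exists t; rewrite ?inW'_OR.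
move=> /andP[k1 hk].
have [x0 x0I] : exists x0, x0 \in Defs.dom e.
  by apply/set0Pn; rewrite -card_gt0.
have Hmk b : b \in H <-> exists p, b = mk x0I p.
  rewrite HH; split; first by case=> bOR bH; apply: H_mk.
  by case=> p ->; split; [apply: mk_OR | apply: mk_H].
have inj := @mk_inj m e x0 x0I.
pose f (b : pmapn m) := odflt 1%g [pick p | b == mk x0I p].
have fmk p : f (mk x0I p) = p.
  rewrite /f; case: pickP => [q /eqP /inj -> //|/(_ p)].
  by rewrite eqxx.
split.
  move=> a b /Hmk [p ->] /Hmk [q ->]; apply/Hmk; exists (p * q)%g.
  exact: mkM.
exists f; split.
- by move=> a b /Hmk [p ->] /Hmk [q ->]; rewrite !fmk => ->.
- by move=> p; exists (mk x0I p); [apply/Hmk; exists p | rewrite fmk].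
- by move=> a b /Hmk [p ->] /Hmk [q ->]; rewrite mkM !fmk.
Qed.
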